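(* There is a function $f:(0,\infty)\to\mathbb{N}$ such that if $G=H^t$ is a direct product of $t$ copies of a non-nilpotent finite group $H$ and $\mathrm{pr}^*(G)\ge\epsilon>0$, then $t\le f(\epsilon)$.
   Context: For subsets $X,Y$ of a finite group, $\Pr(X,Y)=|\{(x,y)\in X\times Y: xy=yx\}|/(|X||Y|)$. $\mathrm{pr}^*(G)$ is the maximum real number $\epsilon$ such that for every pair of distinct primes $p,q$ dividing $|G|$ there exist a Sylow $p$-subgroup $P$ and a Sylow $q$-subgroup $Q$ of $G$ with $\Pr(P,Q)\ge\epsilon$. *)

(* Defs.v *)
From mathcomp Require Import all_boot all_order all_algebra all_fingroup all_solvable.
From mathcomp Require Import reals.
Set Implicit Arguments. Unset Strict Implicit. Unset Printing Implicit Defensive.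
Import Order.TTheory GRing.Theory Num.Theory.
Local Open Scope ring_scope.
Local Open Scope group_scope.

Definition commProb (R : realType) (gT : finGroupType) (X Y : {set gT}) : R :=
  (#|[set xy in setX X Y | ((xy.1 * xy.2)%g == (xy.2 * xy.1)%g)]|%:R
    / (#|X| * #|Y|)%:R)%R.

(* pr*(G): the largest eps such that for every pair of distinct primes p, q
   dividing |G| some Sylow p-subgroup P and Sylow q-subgroup Q satisfy
   Pr(P,Q) >= eps; i.e. min over pairs (p,q) of max over (P,Q) of Pr(P,Q).
   Convention: 1 if there is no such pair (irrelevant for the theorem). *)
Definition prstar (R : realType) (gT : finGroupType) (G : {set gT}) : R :=
  \big[Num.min/1%R]_(p <- primes #|G|)
   \big[Num.min/1%R]_(q <- primes #|G| | q != p)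
    \big[Num.max/0%R]_(P in 'Syl_p(G))
     \big[Num.max/0%R]_(Q in 'Syl_q(G)) commProb R P Q.

(* Main.v *)
Require Import Defs.
From mathcomp Require Import all_boot all_order all_algebra all_fingroup all_solvable.
From mathcomp Require Import reals zify.
Set Implicit Arguments. Unset Strict Implicit. Unset Printing Implicit Defensive.
Import Order.TTheory GRing.Theory Num.Theory.
Local Open Scope group_scope.

From Stdlib Require Import Classical.
Lemma sylows_normal_nil (gT : finGroupType) (K : {group gT}) :
  (forall p (P : {group gT}), prime p -> p.-Sylow(K) P -> P <| K) -> nilpotent K.
Proof.
move=> nK; have sKF: K \subset 'F(K).
  rewrite -{1}(Sylow_gen K) gen_subG; apply/bigcupsP => P /SylowP[p pp sylP].
  exact: Fitting_max (nK p P pp sylP) (pgroup_nil (pHall_pgroup sylP)).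
exact: nilpotentS sKF (Fitting_nil K).
Qed.

Lemma commuting_sylows_nil (gT : finGroupType) (K : {group gT}) :
  (forall p q, prime p -> prime q -> p != q -> exists P Q : {group gT},
      [/\ p.-Sylow(K) P, q.-Sylow(K) Q & P \subset 'C(Q)]) -> nilpotent K.
Proof.
move=> hyp; apply: sylows_normal_nil => p P pp sylP.
have sNK: 'N_K(P) \subset K := subsetIl _ _.
have n0: (0 < #|K : 'N_K(P)|)%N by rewrite indexg_gt0.
have pn: p.-nat #|K : 'N_K(P)|.
  apply/pnatP => // q qp qd; rewrite inE; apply: contraT => qnp.
  have [P0 [Q0 [sylP0 sylQ0 cPQ]]] := hyp p q pp qp ltac:(by rewrite eq_sym).
  have [x Kx defP] := Sylow_trans sylP0 sylP.
  have sylQ: q.-Sylow(K) (Q0 :^ x) by rewrite pHallJ.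
  have sQN: Q0 :^ x \subset 'N_K(P).
    rewrite subsetI (pHall_sub sylQ) /= defP.
    apply: subset_trans (cent_sub _); rewrite centJ conjSg centsC //.
  have := indexgS K sQN.
  case/and3P: sylQ => _ _ q'i dv.
  have := pnat_dvd dv q'i; rewrite p'natE // => /negP nd; case: (nd qd).
have [k kdef] := p_natP pn.
have := card_Syl_mod K pp; rewrite (card_Syl sylP) kdef.
case: k kdef => [kdef _ |k _]; last by rewrite expnS modnMr.
have eN := index1g sNK kdef.
by rewrite /normal (pHall_sub sylP) -eN subsetIr.
Qed.
Section Cnt.
Variable gT : finGroupType.
Implicit Types X Y : {set gT}.

Definition Nc X Y : nat := \sum_(x in X) \sum_(y in Y) nat_of_bool ((x * y)%g == (y * x)%g).

Lemma sum_bool_card (T : finType) (Y : {set T}) (P : pred T) :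
  \sum_(y in Y) nat_of_bool (P y) = #|[set y in Y | P y]|.
Proof.
rewrite -sum1_card [RHS]big_mkcond; rewrite [LHS]big_mkcond /=; apply: eq_bigr => y _.
by rewrite inE; case: (y \in Y); case: (P y).
Qed.

Lemma Nc_card X Y :
  #|[set xy in setX X Y | ((xy.1 * xy.2)%g == (xy.2 * xy.1)%g)]| = Nc X Y.
Proof.
rewrite /Nc pair_big_dep /= -sum_bool_card.
rewrite [LHS]big_mkcond [RHS]big_mkcond /=; apply: eq_bigr => -[x y] _.
by rewrite !inE /=; case: (x \in X); case: (y \in Y); case: (_ == _).
Qed.

Lemma proper_half (H K : {group gT}) : H \subset K -> H :!=: K -> (2 * #|H| <= #|K|)%N.
Proof.
move=> sHK neq; rewrite -(Lagrange sHK) mulnC leq_mul2l.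
have: #|K : H| != 1%N by apply: contra neq => /eqP /(index1g sHK) ->.
by have:= indexg_gt0 K H; case: #|K : H| => [|[|n]] //; rewrite orbT.
Qed.

Lemma Nc_bound (X Y : {group gT}) : ~~ (X \subset 'C(Y)) ->
  (4 * Nc X Y <= 3 * (#|X| * #|Y|))%N.
Proof.
move=> ncXY.
have inner: forall x, x \in X -> (2 * (\sum_(y in Y) nat_of_bool ((x * y)%g == (y * x)%g))
     <= #|Y| + nat_of_bool (x \in 'C_X(Y)) * #|Y|)%N.
  move=> x Xx; rewrite sum_bool_card.
  have ->: [set y in Y | (x * y)%g == (y * x)%g] = 'C_Y[x].
    apply/setP => y; rewrite in_setI [in LHS]inE; congr (_ && _).
    by apply/idP/cent1P => [/eqP e|e]; [rewrite /commute e|rewrite e].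
  case: (boolP (x \in 'C_X(Y))) => [_|nZ].
    by rewrite mul1n mul2n -addnn leq_add // subset_leq_card // subsetIl.
  rewrite mul0n addn0; apply: proper_half; first exact: subsetIl.
  apply: contra nZ => /eqP e; rewrite inE Xx /=; apply/centP => y Yy.
  have: y \in 'C_Y[x] by rewrite e.
  by rewrite inE => /andP[_ /cent1P].
have h1: (2 * Nc X Y <= #|X| * #|Y| + #|'C_X(Y)| * #|Y|)%N.
  rewrite /Nc big_distrr /=.
  apply: (@leq_trans (\sum_(x in X) (#|Y| + nat_of_bool (x \in 'C_X(Y)) * #|Y|))); first exact: leq_sum inner.
  rewrite big_split /= sum_nat_const -big_distrl /= sum_bool_card.
  rewrite (_ : [set x in X | x \in 'C_X(Y)] = 'C_X(Y)) //; apply/setP => x; rewrite inE in_setI; by case: (x \in X).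
have h2: (2 * #|'C_X(Y)| <= #|X|)%N.
  apply: proper_half; first exact: subsetIl.
  by apply: contra ncXY => /eqP <-; apply: subsetIr.
have h3: (2 * #|'C_X(Y)| * #|Y| <= #|X| * #|Y|)%N by rewrite leq_mul2r h2 orbT.
lia.
Qed.
Section Prod.
Variables A B : {group gT}.
Hypothesis cAB : B \subset 'C(A).
Hypothesis tAB : A :&: B = 1.

Lemma uniq_dec a a' b b' : a \in A -> a' \in A -> b \in B -> b' \in B ->
  (a * b == a' * b') = (a == a') && (b == b').
Proof.
move=> Aa Aa' Bb Bb'; apply/idP/idP; last by case/andP=> /eqP-> /eqP->.
move=> /eqP e.
have ee: a'^-1 * a = b' * b^-1.
  apply: (canRL (mulgK b)); rewrite -mulgA e mulKg //.
have: a'^-1 * a \in A :&: B.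
  by rewrite inE groupM ?groupV //= ee groupM ?groupV.
rewrite tAB inE => h; move: (h); rewrite -eq_mulVg1 => /eqP ->.
by move: h; rewrite ee -eq_mulgV1 eq_refl eq_sym.
Qed.

Lemma comAB a b : a \in A -> b \in B -> commute a b.
Proof. by move=> Aa Bb; apply/esym; apply: (centsP cAB). Qed.

Lemma sum_mul X1 X2 (F : gT -> nat) : X1 \subset A -> X2 \subset B ->
  \sum_(z in (X1 * X2)%g) F z = \sum_(x1 in X1) \sum_(x2 in X2) F (x1 * x2)%g.
Proof.
move=> sX1 sX2.
have ->: X1 * X2 = [set u.1 * u.2 | u in setX X1 X2].
  apply/setP => z; apply/mulsgP/imsetP => [[x y Xx Yy ->]|[[x y]]].
    by exists (x, y); rewrite // inE Xx Yy.
  by rewrite inE /= => /andP[Xx Yy] ->; exists x y.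
rewrite big_imset /=; last first.
  move=> [x y] [x' y']; rewrite !inE /= => /andP[Xx Yy] /andP[Xx' Yy'] /eqP.
  rewrite uniq_dec ?(subsetP sX1) ?(subsetP sX2) // => /andP[/eqP-> /eqP->] //.
rewrite pair_big_dep /=; apply: eq_bigl => -[x y]; by rewrite inE.
Qed.

Lemma Nc_prod X1 Y1 X2 Y2 : X1 \subset A -> Y1 \subset A -> X2 \subset B -> Y2 \subset B ->
  Nc (X1 * X2) (Y1 * Y2) = (Nc X1 Y1 * Nc X2 Y2)%N.
Proof.
move=> sX1 sY1 sX2 sY2; rewrite /Nc sum_mul //.
rewrite big_distrlr /=; apply: eq_bigr => x1 X1x1.
apply: eq_bigr => x2 X2x2.
rewrite sum_mul // big_distrlr /=; apply: eq_bigr => y1 Y1y1.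
apply: eq_bigr => y2 Y2y2.
have Ax1 := subsetP sX1 _ X1x1; have Ay1 := subsetP sY1 _ Y1y1.
have Bx2 := subsetP sX2 _ X2x2; have By2 := subsetP sY2 _ Y2y2.
have ->: x1 * x2 * (y1 * y2) = (x1 * y1) * (x2 * y2).
  by rewrite -!mulgA; congr (_ * _); rewrite !mulgA (comAB Ay1 Bx2).
have ->: y1 * y2 * (x1 * x2) = (y1 * x1) * (y2 * x2).
  by rewrite -!mulgA; congr (_ * _); rewrite !mulgA (comAB Ax1 By2).
rewrite (@uniq_dec (x1*y1) (y1*x1) (x2*y2) (y2*x2)) ?groupM //.
by case: (_ == _); case: (_ == _).
Qed.


End Prod.
End Cnt.

Section Main.
Variable gT : finGroupType.

Lemma Nc_le (X Y : {set gT}) : (Nc X Y <= #|X| * #|Y|)%N.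
Proof.
rewrite /Nc -sum_nat_const; apply: leq_sum => x _.
rewrite -sum1_card; apply: leq_sum => y _; by case: (_ == _).
Qed.

Lemma sylow_dprod p (K L G P : {group gT}) : K \x L = G -> p.-Sylow(G) P ->
  [/\ (K :&: P) * (L :&: P) = P, p.-Sylow(K) (K :&: P) & p.-Sylow(L) (L :&: P)].
Proof.
move=> eG sylP; have [nK nL] := dprod_normal2 eG.
have sK := Sylow_setI_normal nK sylP; have sL := Sylow_setI_normal nL sylP.
have [_ _ cKL tKL] := dprodP eG.
split=> //; apply/eqP; rewrite eqEcard mul_subG ?subsetIr //=.
rewrite TI_cardMg; last by apply/trivgP; rewrite -tKL setISS ?subsetIl.
rewrite (card_Hall sK) (card_Hall sL) -partnM ?cardG_gt0 // (dprod_card eG).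
by rewrite (card_Hall sylP).
Qed.

Lemma main_bound p q t (Hs : 'I_t -> {group gT}) (G : {group gT}) :
 \big[dprod/1]_(i < t) Hs i = G ->
 (forall i (P Q : {group gT}), p.-Sylow(Hs i) P -> q.-Sylow(Hs i) Q -> ~~ (P \subset 'C(Q))) ->
 forall P Q : {group gT}, p.-Sylow(G) P -> q.-Sylow(G) Q ->
   (4 ^ t * Nc P Q <= 3 ^ t * (#|P| * #|Q|))%N.
Proof.
elim: t Hs G => [|t IH] Hs G.
  by move=> _ _ P Q _ _; rewrite !expn0 !mul1n Nc_le.
rewrite big_ord_recr /= => eG bad P Q sP sQ.
have [[K L eK eL] _ _ _] := dprodP eG.
have eG' : K \x Hs ord_max = G by rewrite -eK.
have [eP sKP sLP] := sylow_dprod eG' sP.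
have [eQ sKQ sLQ] := sylow_dprod eG' sQ.
have [_ _ cKL tKL] := dprodP eG'.
have h1 : (4 ^ t * Nc (K :&: P) (K :&: Q) <= 3 ^ t * (#|(K :&: P)%G| * #|(K :&: Q)%G|))%N := IH (fun i => Hs (widen_ord (leqnSn t) i)) K eK
   (fun i => bad (widen_ord (leqnSn t) i)) _ _ sKP sKQ.
have h2 : (4 * Nc (Hs ord_max :&: P) (Hs ord_max :&: Q) <= 3 * (#|(Hs ord_max :&: P)%G| * #|(Hs ord_max :&: Q)%G|))%N := Nc_bound (bad ord_max _ _ sLP sLQ).
have ->: Nc P Q = Nc ((K :&: P) * (Hs ord_max :&: P)) ((K :&: Q) * (Hs ord_max :&: Q)).
  by rewrite eP eQ.
rewrite (Nc_prod cKL tKL) ?subsetIl //.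
rewrite -[in X in (_ <= _ * (X * _))%N]eP -[in X in (_ <= _ * (_ * X))%N]eQ.
rewrite !TI_cardMg; first last.
- by apply/trivgP; rewrite -tKL setISS ?subsetIl.
- by apply/trivgP; rewrite -tKL setISS ?subsetIl.
have := leq_mul h1 h2; rewrite !expnS.
nia.
Qed.

End Main.

Lemma bad_pair (gT : finGroupType) (K : {group gT}) : ~~ nilpotent K ->
  exists p q, [/\ prime p, prime q, p != q, (p %| #|K|)%N && (q %| #|K|)%N &
   forall P Q : {group gT}, p.-Sylow(K) P -> q.-Sylow(K) Q -> ~~ (P \subset 'C(Q))].
Proof.
move=> nN.
have [p [q [pp qp pq bad]]] : exists p q, [/\ prime p, prime q, p != q &
   forall P Q : {group gT}, p.-Sylow(K) P -> q.-Sylow(K) Q -> ~~ (P \subset 'C(Q))].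
  apply: NNPP => nex; move/negP: nN; apply; apply: commuting_sylows_nil => p q pp qp pq.
  apply: NNPP => nex2; apply: nex; exists p, q; split=> // P Q sP sQ.
  by apply/negP => c; apply: nex2; exists P, Q; split.
have [P sP] := Sylow_exists p K; have [Q sQ] := Sylow_exists q K.
have nc := bad P Q sP sQ.
have ntP : P :!=: 1 by apply: contraNneq nc => ->; rewrite sub1G.
have ntQ : Q :!=: 1 by apply: contraNneq nc => ->; rewrite centsC sub1G.
have [_ dP _] := pgroup_pdiv (pHall_pgroup sP) ntP.
have [_ dQ _] := pgroup_pdiv (pHall_pgroup sQ) ntQ.
exists p, q; split=> //; apply/andP; split.
  exact: dvdn_trans dP (cardSg (pHall_sub sP)).
exact: dvdn_trans dQ (cardSg (pHall_sub sQ)).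
Qed.

Lemma bad_transfer (gT hT : finGroupType) (K : {group gT}) (H : {group hT}) p q :
  K \isog H ->
  (forall P Q : {group hT}, p.-Sylow(H) P -> q.-Sylow(H) Q -> ~~ (P \subset 'C(Q))) ->
  (forall P Q : {group gT}, p.-Sylow(K) P -> q.-Sylow(K) Q -> ~~ (P \subset 'C(Q))).
Proof.
case/isogP => f injf eH bad P Q sP sQ; apply/negP => c.
have sP' := morphim_pSylow f (pHall_sub sP) sP.
have sQ' := morphim_pSylow f (pHall_sub sQ) sQ.
rewrite eH in sP' sQ'.
by move/negP: (bad _ _ sP' sQ'); apply; exact: morphim_cents.
Qed.

Lemma pow_bound t : (t * 3 ^ t <= 3 * 4 ^ t)%N.
Proof.
suff: ((t + 3) * 3 ^ t <= 3 * 4 ^ t)%N.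
  by apply: leq_trans; rewrite leq_mul2r leq_addr orbT.
elim: t => [|t IH] //.
rewrite !expnS.
have : (4 * ((t + 3) * 3 ^ t) <= 4 * (3 * 4 ^ t))%N by rewrite leq_mul2l IH orbT.
nia.
Qed.

Section Real.
Local Open Scope ring_scope.
Variable R : realType.

Lemma big_min_le (s : seq nat) (P : pred nat) (F : nat -> R) a :
  a \in s -> P a -> \big[Num.min/1]_(i <- s | P i) F i <= F a.
Proof.
elim: s => // b s IH; rewrite inE big_cons; case/orP => [/eqP<- Pb | as_ Pa].
  by rewrite Pb ge_min lexx.
case: (P b); last exact: IH.
by rewrite ge_min IH ?orbT.
Qed.

Lemma big_max_le (T : finType) (A : {set T}) (F : T -> R) b :
  0 <= b -> (forall i, i \in A -> F i <= b) -> \big[Num.max/0]_(i in A) F i <= b.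
Proof.
move=> b0 hF; apply: (big_ind (fun x => x <= b)) => //.
by move=> x y hx hy; rewrite ge_max hx hy.
Qed.

Lemma commProb_le (gT : finGroupType) (P Q : {group gT}) t :
  (4 ^ t * Nc P Q <= 3 ^ t * (#|P| * #|Q|))%N ->
  commProb R P Q <= (3 ^ t)%:R / (4 ^ t)%:R.
Proof.
move=> h; rewrite /commProb Nc_card.
have h1 : (0 : R) < (#|P| * #|Q|)%:R by rewrite ltr0n muln_gt0 !cardG_gt0.
have h2 : (0 : R) < (4 ^ t)%:R by rewrite ltr0n expn_gt0.
rewrite ler_pdivrMr // mulrAC ler_pdivlMr // -!natrM ler_nat.
by rewrite mulnC.
Qed.

End Real.

Close Scope group_scope.
Unset Implicit Arguments.
Set Strict Implicit.

Theorem lemma4p2 (R : realType) :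
  exists f : R -> nat,
  forall (hT gT : finGroupType) (H : {group hT}) (G : {group gT})
         (t : nat) (Hs : 'I_t -> {group gT}) (eps : R),
    ~~ nilpotent H ->
    (\big[dprod/1]_(i < t) Hs i)%g = G ->
    (forall i, Hs i \isog H) ->
    (0 < eps)%R ->
    (eps <= prstar R G)%R ->
    (t <= f eps)%N.
Proof.
Local Open Scope group_scope.
Local Open Scope ring_scope.
exists (fun eps => Num.truncn (3%:R / eps)%R).
move=> hT gT H G t Hs eps nH eG iso e0 le.
case: t Hs eG iso le => [|t] Hs eG iso le; first by [].
have [p [q [pp qp pq /andP[pH qH] badH]]] := bad_pair nH.
have bad i := bad_transfer (iso i) badH.
have dG i : (#|Hs i| %| #|G|)%N by rewrite -(bigdprod_card eG) (bigD1 i) //= dvdn_mulr.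
have cH := card_isog (iso ord0).
have pG : p \in primes #|G| by rewrite mem_primes pp cardG_gt0 (dvdn_trans _ (dG ord0)) // cH.
have qG : q \in primes #|G| by rewrite mem_primes qp cardG_gt0 (dvdn_trans _ (dG ord0)) // cH.
have hb : forall P Q : {group gT}, p.-Sylow(G) P -> q.-Sylow(G) Q ->
    (commProb R P Q <= (3 ^ t.+1)%:R / (4 ^ t.+1)%:R)%R.
  by move=> P Q sP sQ; apply: commProb_le; apply: (main_bound eG bad sP sQ).
have le2 : (prstar R G <= (3 ^ t.+1)%:R / (4 ^ t.+1)%:R)%R.
  rewrite /prstar; apply: le_trans (big_min_le _ pG _) _ => //.
  apply: le_trans (big_min_le _ qG _) _; first by rewrite eq_sym.
  apply: big_max_le => [|P]; first by rewrite divr_ge0 ?ler0n.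
  rewrite inE => sP; apply: big_max_le => [|Q]; first by rewrite divr_ge0 ?ler0n.
  by rewrite inE => sQ; apply: hb.
have le1 := le_trans le le2.
rewrite truncn_ge_nat; last by rewrite divr_ge0 ?ler0n // ltW.
rewrite ler_pdivlMr //.
apply: le_trans (ler_wpM2l (ler0n _ t.+1) le1) _.
have h4 : (0 : R) < (4 ^ t.+1)%:R by rewrite ltr0n expn_gt0.
rewrite mulrA ler_pdivrMr // -!natrM ler_nat.
exact: pow_bound.
Qed.
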